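(* For every preordered group $(G,P_G)$, the lattice of normal subobjects of $(G,P_G)$ in $\mathsf{PreOrdGrp}$ is modular: for normal subobjects $(A,P_A)$, $(B,P_B)$, $(C,P_C)$ of $(G,P_G)$ with $(C,P_C)\le(A,P_A)$, one has $(A,P_A)\wedge((B,P_B)\vee(C,P_C))=((A,P_A)\wedge(B,P_B))\vee(C,P_C)$.
   Context: A preordered group is a pair $(G,P_G)$ where $G$ is a group (additively written, not necessarily abelian) and $P_G\subseteq G$ is a submonoid closed under conjugation; morphisms $(G,P_G)\to(H,P_H)$ are group homomorphisms $f$ with $f(P_G)\subseteq P_H$. This is the category $\mathsf{PreOrdGrp}$. A normal subobject of $(G,P_G)$ is a subobject which is the kernel of some morphism; up to isomorphism these are exactly the pairs $(A,A\cap P_G)$ with $A$ a normal subgroup of $G$. Normal subobjects are ordered by inclusion; meet and join are taken in the poset of normal subobjects of $(G,P_G)$. *)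

(* Defs.v *)
Set Implicit Arguments.

Section Defs.
Variables (T : Type) (add : T -> T -> T) (opp : T -> T) (zero : T).

Definition is_group : Prop :=
  (forall x y z, add x (add y z) = add (add x y) z) /\
  (forall x, add zero x = x) /\ (forall x, add x zero = x) /\
  (forall x, add (opp x) x = zero) /\ (forall x, add x (opp x) = zero).

Definition conjg (g x : T) : T := add (add g x) (opp g).

(* P is a submonoid closed under conjugation: (G,P) is a preordered group *)
Definition preorder_cone (P : T -> Prop) : Prop :=
  P zero /\ (forall x y, P x -> P y -> P (add x y)) /\
  (forall g x, P x -> P (conjg g x)).

Definition normal_subgroup (A : T -> Prop) : Prop :=
  A zero /\ (forall x y, A x -> A y -> A (add x y)) /\
  (forall x, A x -> A (opp x)) /\
  (forall g x, A x -> A (conjg g x)).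

Definition normal_subobject (P : T -> Prop) (X : (T -> Prop) * (T -> Prop)) : Prop :=
  normal_subgroup (fst X) /\ (forall x, snd X x <-> (fst X x /\ P x)).

Definition sub_le (X Y : (T -> Prop) * (T -> Prop)) : Prop :=
  (forall x, fst X x -> fst Y x) /\ (forall x, snd X x -> snd Y x).

Definition sub_eq (X Y : (T -> Prop) * (T -> Prop)) : Prop :=
  sub_le X Y /\ sub_le Y X.

Definition is_meet (P : T -> Prop) (X Y M : (T -> Prop) * (T -> Prop)) : Prop :=
  normal_subobject P M /\ sub_le M X /\ sub_le M Y /\
  (forall Z, normal_subobject P Z -> sub_le Z X -> sub_le Z Y -> sub_le Z M).

Definition is_join (P : T -> Prop) (X Y J : (T -> Prop) * (T -> Prop)) : Prop :=
  normal_subobject P J /\ sub_le X J /\ sub_le Y J /\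
  (forall Z, normal_subobject P Z -> sub_le X Z -> sub_le Y Z -> sub_le J Z).

End Defs.

(* Main.v *)
Require Import Defs.

Lemma grp_facts (T : Type) (add : T -> T -> T) (opp : T -> T) (zero : T) :
  is_group add opp zero ->
  (forall a b, opp (add a b) = add (opp b) (opp a)) /\
  (forall a, opp (opp a) = a).
Proof.
  intros [A [L0 [R0 [LI RI]]]].
  assert (uniq : forall x y, add x y = zero -> y = opp x).
  { intros x y H. rewrite <- (L0 y), <- (LI x), <- A, H, R0. reflexivity. }
  split.
  - intros a b. symmetry. apply uniq.
    rewrite <- A, (A b), RI, L0, RI. reflexivity.
  - intros a. symmetry. apply uniq. apply LI.
Qed.

Lemma le_of_fst (T : Type) (add : T -> T -> T) (opp : T -> T) (zero : T) P X Y :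
  normal_subobject add opp zero P X -> normal_subobject add opp zero P Y ->
  (forall x, fst X x -> fst Y x) -> sub_le X Y.
Proof.
  intros [_ HX] [_ HY] H. split; [exact H|].
  intros x Hx. apply HY. apply HX in Hx. destruct Hx. split; auto.
Qed.

Definition meetS (T : Type) (P : T -> Prop) (X Y : (T -> Prop) * (T -> Prop)) :=
  (fun x => fst X x /\ fst Y x, fun x => (fst X x /\ fst Y x) /\ P x).

Definition joinS (T : Type) (add : T -> T -> T) (P : T -> Prop) (X Y : (T -> Prop) * (T -> Prop)) :=
  (fun x => exists a b, fst X a /\ fst Y b /\ x = add a b,
   fun x => (exists a b, fst X a /\ fst Y b /\ x = add a b) /\ P x).

Lemma meetS_ok (T : Type) (add : T -> T -> T) (opp : T -> T) (zero : T) P X Y :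
  normal_subobject add opp zero P X -> normal_subobject add opp zero P Y ->
  is_meet add opp zero P X Y (meetS _ P X Y).
Proof.
  intros HX HY.
  assert (HM : normal_subobject add opp zero P (meetS _ P X Y)).
  { destruct HX as [[X0 [XA [XO XC]]] _]. destruct HY as [[Y0 [YA [YO YC]]] _].
    split; [|simpl; tauto].
    repeat split; simpl in *; firstorder. }
  split; [exact HM|]. split; [|split].
  - apply (le_of_fst _ add opp zero P); auto. simpl; tauto.
  - apply (le_of_fst _ add opp zero P); auto. simpl; tauto.
  - intros Z HZ [HZX _] [HZY _]. apply (le_of_fst _ add opp zero P); auto. simpl; auto.
Qed.

Lemma joinS_ok (T : Type) (add : T -> T -> T) (opp : T -> T) (zero : T) P X Y :
  is_group add opp zero ->
  normal_subobject add opp zero P X -> normal_subobject add opp zero P Y ->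
  is_join add opp zero P X Y (joinS _ add P X Y).
Proof.
  intros hG HX HY.
  pose proof (grp_facts _ _ _ _ hG) as [oppD oppK].
  destruct hG as [A [L0 [R0 [LI RI]]]].
  assert (HJ : normal_subobject add opp zero P (joinS _ add P X Y)).
  { destruct HX as [[X0 [XA [XO XC]]] _]. destruct HY as [[Y0 [YA [YO YC]]] _].
    split; [|simpl; tauto].
    split; [|split; [|split]]; simpl.
    - exists zero, zero. rewrite L0. auto.
    - intros x y (a & b & Ha & Hb & ->) (a' & b' & Ha' & Hb' & ->).
      exists (add a (conjg add opp b a')), (add b b').
      split; [apply XA; auto|]. split; [apply YA; auto|].
      unfold conjg. rewrite <- !A. f_equal. rewrite !A. f_equal. rewrite <- !A.
      rewrite LI, R0. reflexivity.
    - intros x (a & b & Ha & Hb & ->).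
      exists (conjg add opp (opp b) (opp a)), (opp b).
      split; [apply XC, XO; auto|]. split; [apply YO; auto|].
      unfold conjg. rewrite oppD, oppK, <- !A, RI, R0. reflexivity.
    - intros g x (a & b & Ha & Hb & ->).
      exists (conjg add opp g a), (conjg add opp g b).
      split; [apply XC; auto|]. split; [apply YC; auto|].
      unfold conjg. rewrite <- !A. f_equal. f_equal. rewrite A, LI, L0.
      reflexivity. }
  split; [exact HJ|]. split; [|split].
  - apply (le_of_fst _ add opp zero P); auto. simpl. intros x Hx. exists x, zero.
    destruct HY as [[Y0 _] _]. rewrite R0. auto.
  - apply (le_of_fst _ add opp zero P); auto. simpl. intros x Hx. exists zero, x.
    destruct HX as [[X0 _] _]. rewrite L0. auto.
  - intros Z HZ [HZX _] [HZY _]. apply (le_of_fst _ add opp zero P); auto. simpl.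
    intros x (a & b & Ha & Hb & ->). destruct HZ as [[_ [ZA _]] _]. auto.
Qed.

Theorem proposition2p5
  (T : Type) (add : T -> T -> T) (opp : T -> T) (zero : T) (P : T -> Prop)
  (hG : is_group add opp zero) (hP : preorder_cone add opp zero P) :
  (* normal subobjects form a lattice ... *)
  (forall X Y, normal_subobject add opp zero P X -> normal_subobject add opp zero P Y ->
     exists M, is_meet add opp zero P X Y M) /\
  (forall X Y, normal_subobject add opp zero P X -> normal_subobject add opp zero P Y ->
     exists J, is_join add opp zero P X Y J) /\
  (* ... which is modular *)
  (forall A B C J1 M1 M2 J2,
     normal_subobject add opp zero P A -> normal_subobject add opp zero P B ->
     normal_subobject add opp zero P C -> sub_le C A ->
     is_join add opp zero P B C J1 -> is_meet add opp zero P A J1 M1 ->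
     is_meet add opp zero P A B M2 -> is_join add opp zero P M2 C J2 ->
     sub_eq M1 J2).
Proof.
  split; [intros X Y HX HY; eexists; apply meetS_ok; eauto|].
  split; [intros X Y HX HY; eexists; apply joinS_ok; eauto|].
  intros A B C J1 M1 M2 J2 HA HB HC HCA HJ1 HM1 HM2 HJ2.
  pose proof hG as [GA [L0 [R0 [LI RI]]]].
  destruct HJ1 as [NJ1 [BJ1 [CJ1 LJ1]]].
  destruct HM1 as [NM1 [M1A [M1J1 LM1]]].
  destruct HM2 as [NM2 [M2A [M2B LM2]]].
  destruct HJ2 as [NJ2 [M2J2 [CJ2 LJ2]]].
  split.
  - apply (le_of_fst _ add opp zero P); auto. intros x Hx.
    assert (HxA : fst A x) by (apply M1A; auto).
    assert (HxJ : fst J1 x) by (apply M1J1; auto).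
    pose proof (joinS_ok _ _ _ _ _ _ _ hG HB HC) as [NS [_ [_ _]]].
    assert (Hle : sub_le J1 (joinS _ add P B C)).
    { apply LJ1; auto; apply (joinS_ok _ _ _ _ _ _ _ hG HB HC). }
    destruct Hle as [Hle _]. destruct (Hle x HxJ) as (b & c & Hb & Hc & ->).
    assert (HbA : fst A b).
    { replace b with (add (add b c) (opp c)).
      - destruct HA as [[_ [AA [AO _]]] _]. apply AA; auto. apply AO. apply HCA; auto.
      - rewrite <- GA, RI, R0. reflexivity. }
    assert (HbM2 : fst M2 b).
    { assert (Hm : sub_le (meetS _ P A B) M2).
      { apply LM2; apply (meetS_ok _ _ _ _ _ _ _ HA HB). }
      apply Hm. simpl; auto. }
    destruct NJ2 as [[_ [J2A _]] _]. apply J2A; [apply M2J2 | apply CJ2]; auto.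
  - apply LM1; auto; apply LJ2; auto.
    destruct BJ1, M2B; split; auto.
Qed.
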